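(* Let $n,m$ be positive integers. Every winning sequence of moves $y_1,\dots,y_N$ in the $(n,m)$-game has length $N\ge m^n-1$; equivalently, no sequence of fewer than $m^n-1$ moves is winning.
   Context: The $(n,m)$-game: $n$ counters at positions $1,\dots,n$ (vertices in cyclic order of a regular $n$-gon table), each showing an element of $\mathbb{Z}_m$; a configuration is a vector in $\mathbb{Z}_m^n$, initially arbitrary and unknown. Each turn the player chooses a move $y\in\mathbb{Z}_m^n$ added coordinatewise, then the table is rotated by an adversarially chosen $k\in\mathbb{Z}_n$ (possibly $k=0$), replacing $x$ by $x'$ with $x'_{i+k}=x_i$ (indices mod $n$). The player wins if at some moment (including initially) all counters show $0$. A strategy is a finite sequence of moves; it is winning if it forces the zero configuration at some time for every initial configuration and every choice of rotations. *)

(* Defs.v *)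
From HB Require Import structures.
From mathcomp Require Import all_boot all_order all_algebra.
Set Implicit Arguments. Unset Strict Implicit. Unset Printing Implicit Defensive.
Import GRing.Theory.
Local Open Scope ring_scope.

(* Positions are 'I_n (written
   'I_(n.-1).+1 so that it carries the cyclic group structure Z_n; for n > 0
   this type is 'I_n), counter values are Z_m, likewise 'I_(m.-1).+1. *)
Definition pos (n : nat) := 'I_(n.-1).+1.
Definition val_t (m : nat) := 'I_(m.-1).+1.

Definition config (n m : nat) := {ffun pos n -> val_t m}.

Definition zero_config (n m : nat) : config n m := [ffun _ => 0].

Definition add_move (n m : nat) (x y : config n m) : config n m :=
  [ffun i => x i + y i].

Definition rotate (n m : nat) (k : pos n) (x : config n m) : config n m :=
  [ffun j => x (j - k)].

(* configuration after t turns, starting at x, with moves ys and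
   rotations ks t chosen by the adversary at turn t (0-indexed) *)
Fixpoint state (n m : nat) (x : config n m) (ys : seq (config n m))
  (ks : nat -> pos n) (t : nat) : config n m :=
  match t with
  | 0 => x
  | t'.+1 => rotate (ks t') (add_move (state x ys ks t') (nth (zero_config n m) ys t'))
  end.

(* A finite sequence of moves is winning if for every initial configuration
   and every choice of rotations the zero configuration occurs at some time
   0 <= t <= size ys (rotations do not affect being zero, so checking after
   each full turn suffices). *)
Definition winning (n m : nat) (ys : seq (config n m)) : Prop :=
  forall (x : config n m) (ks : nat -> pos n),
    exists2 t, (t <= size ys)%N & state x ys ks t = zero_config n m.

(* Main.v *)
Require Import Defs.
From mathcomp Require Import all_boot all_order all_algebra.
Import GRing.Theory.

Lemma state_inj (n m : nat) (ys : seq (config n m)) (ks : nat -> pos n) t x x' :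
  state x ys ks t = state x' ys ks t -> x = x'.
Proof.
elim: t => [//|t IH] /= H; apply: IH.
apply/ffunP => i.
have /ffunP/(_ ((i + ks t)%R)) := H.
rewrite !ffunE GRing.addrK => /GRing.addIr.
done.
Qed.

Theorem theorem5p1 (n m : nat) (hn : (0 < n)%N) (hm : (0 < m)%N)
  (ys : seq (config n m)) :
  winning ys -> (m ^ n - 1 <= size ys)%N.
Proof.
move=> W.
pose ks := fun _ : nat => (ord0 : pos n).
have H x : exists t : 'I_(size ys).+1, state x ys ks t == zero_config n m.
  have [t Ht Hs] := W x ks.
  by exists (Ordinal (n:=(size ys).+1) (m:=t) Ht); apply/eqP.
pose f x := odflt ord0 [pick t : 'I_(size ys).+1 | state x ys ks t == zero_config n m].
have finj : injective f.
  move=> x x'; rewrite /f.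
  case: pickP => [t /eqP Ht|Hn]; last by have [t0 Ht0] := H x; rewrite Hn in Ht0.
  case: pickP => [t' /eqP Ht'|Hn]; last by have [t0 Ht0] := H x'; rewrite Hn in Ht0.
  move=> /= E; subst t'; apply: (@state_inj _ _ ys ks t).
  by rewrite Ht Ht'.
have := @leq_card {ffun pos n -> val_t m} _ f finj.
rewrite card_ffun !card_ord /pos /val_t !prednK //.
move=> Hc; rewrite leq_subLR; by rewrite add1n.
Qed.
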